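(* Let $N\ge2$ and $\nu_1,\dots,\nu_N\in\mathcal{M}_h\cap\Delta$. Let $\boldsymbol{\sigma}=(\boldsymbol{\sigma}_1,\dots,\boldsymbol{\sigma}_N)\in\mathcal{S}_h^N$ and $\nu\in\mathcal{M}_h\cap\Delta$. Then each equation $-\Delta_h\xi_i'=\mathrm{div}_h\boldsymbol{\sigma}_i+\nu_i-\nu$ ($i=1,\dots,N$) admits a solution, and for any choice of such solutions $\xi_1',\dots,\xi_N'$, the Euclidean projection $(\widetilde{\boldsymbol{\sigma}},\widetilde\nu)$ of $(\boldsymbol{\sigma},\nu)$ onto $$\mathcal{F}_h=\{(\boldsymbol{\sigma}_1,\dots,\boldsymbol{\sigma}_N,\mu)\in\mathcal{S}_h^N\times\mathcal{M}_h:\mathrm{div}_h\boldsymbol{\sigma}_k+\nu_k=\mu\ \forall k\}$$ is given by $\widetilde{\boldsymbol{\sigma}}_i=\boldsymbol{\sigma}_i+\nabla_h\xi_i$ and $\widetilde\nu=\nu+\xi_1+\dots+\xi_N$, where $\xi_i=\xi_i'-(I-\tfrac1N\Delta_h)^{-1}\big(\tfrac1N\sum_{j=1}^N\xi_j'\big)$.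
   Context: Grid $\mathcal{G}_h=\{hi:i=1,\dots,p\}^2$ with $h=1/p$; $\mathcal{M}_h=\{\mu:\mathcal{G}_h\to\mathbb{R}\}\cong\mathbb{R}^{p^2}$, $\mathcal{S}_h=\{\boldsymbol{\sigma}:\mathcal{G}_h\to\mathbb{R}^2\}\cong\mathbb{R}^{p^2\times2}$, both with the standard $\ell^2$ inner products (and the product inner product on $\mathcal{S}_h^N\times\mathcal{M}_h$, with respect to which the projection is taken). $\Delta\subset\mathcal{M}_h$ is the unit simplex (nonnegative entries summing to 1). $\nabla_h:\mathcal{M}_h\to\mathcal{S}_h$ is the discrete gradient by forward differences with homogeneous Neumann boundary conditions: $(\nabla_hu)_{i,j}=(u_{i+1,j}-u_{i,j},\,u_{i,j+1}-u_{i,j})$, where a difference is set to $0$ when $i=p$ (resp. $j=p$); its kernel is the constants. $\mathrm{div}_h=-\nabla_h^*$ and $\Delta_h=\mathrm{div}_h\nabla_h$. *)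

(* Defs.v *)
From mathcomp Require Import all_boot all_order all_algebra.
From mathcomp Require Import reals.
Set Implicit Arguments. Unset Strict Implicit. Unset Printing Implicit Defensive.
Import Order.TTheory GRing.Theory Num.Theory.
Local Open Scope ring_scope.

(* Grid G_h = {h i : i = 1..p}^2 is indexed by 'I_p * 'I_p (index i <-> i+1).
   M_h := 'M[R]_p  (scalar grid functions),
   S_h := 'M[R]_p * 'M[R]_p  (vector fields: (x-component, y-component)). *)

Definition Sh (R : realType) (p : nat) := ('M[R]_p * 'M[R]_p)%type.

Definition dotM (R : realType) (p : nat) (u v : 'M[R]_p) : R :=
  \sum_(i < p) \sum_(j < p) u i j * v i j.
Definition dotS (R : realType) (p : nat) (s t : Sh R p) : R :=
  dotM s.1 t.1 + dotM s.2 t.2.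

Definition addS (R : realType) (p : nat) (s t : Sh R p) : Sh R p :=
  (s.1 + t.1, s.2 + t.2).
Definition subS (R : realType) (p : nat) (s t : Sh R p) : Sh R p :=
  (s.1 - t.1, s.2 - t.2).

(* Forward differences with homogeneous Neumann BC: difference is 0 on the
   last row/column (index p-1, i.e. i = p in the paper's 1-based indexing).
   When i.+1 < p, ordS i has value i.+1. *)
Definition gradh (R : realType) (p : nat) (u : 'M[R]_p) : Sh R p :=
  (\matrix_(i < p, j < p) (if (i.+1 < p)%N then u (ordS i) j - u i j else 0),
   \matrix_(i < p, j < p) (if (j.+1 < p)%N then u i (ordS j) - u i j else 0)).

(* div_h = - grad_h^* , with the adjoint taken w.r.t. the l^2 inner products:
   (grad_h^* s)_{ij} = <s, grad_h e_{ij}>. *)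
Definition divh (R : realType) (p : nat) (s : Sh R p) : 'M[R]_p :=
  \matrix_(i < p, j < p) - dotS s (gradh (delta_mx i j)).

Definition laph (R : realType) (p : nat) (u : 'M[R]_p) : 'M[R]_p :=
  divh (gradh u).

Definition in_simplex (R : realType) (p : nat) (mu : 'M[R]_p) : Prop :=
  (forall i j, 0 <= mu i j) /\ \sum_(i < p) \sum_(j < p) mu i j = 1.

Definition Fh (R : realType) (p N : nat) (nus : 'I_N -> 'M[R]_p)
  (x : ('I_N -> Sh R p) * 'M[R]_p) : Prop :=
  forall k : 'I_N, divh (x.1 k) + nus k = x.2.

Definition sqdist (R : realType) (p N : nat)
  (x y : ('I_N -> Sh R p) * 'M[R]_p) : R :=
  \sum_(k < N) dotS (subS (x.1 k) (y.1 k)) (subS (x.1 k) (y.1 k))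
  + dotM (x.2 - y.2) (x.2 - y.2).

Definition is_proj (R : realType) (p N : nat)
  (F : ('I_N -> Sh R p) * 'M[R]_p -> Prop)
  (x y : ('I_N -> Sh R p) * 'M[R]_p) : Prop :=
  F y /\ forall z, F z -> sqdist x y <= sqdist x z.

(* Main.v *)
Require Import Defs.
From mathcomp Require Import all_boot all_order all_algebra.
From mathcomp Require Import reals.
From mathcomp Require Import ring lra.
Set Implicit Arguments. Unset Strict Implicit. Unset Printing Implicit Defensive.
Import Order.TTheory GRing.Theory Num.Theory.
Local Open Scope ring_scope.

Section Gen.
Variable R : realType.

Lemma lin0 (U V : lmodType R) (f : U -> V)
  (hf : forall a u v, f (a *: u + v) = a *: f u + f v) : f 0 = 0.
Proof.
have := hf 1 0 0; rewrite scaler0 addr0 scale1r => h.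
by apply: (addrI (f 0)); rewrite addr0 -h.
Qed.

Lemma linD (U V : lmodType R) (f : U -> V)
  (hf : forall a u v, f (a *: u + v) = a *: f u + f v) u v : f (u + v) = f u + f v.
Proof. by have := hf 1 u v; rewrite !scale1r. Qed.

Lemma linZ (U V : lmodType R) (f : U -> V)
  (hf : forall a u v, f (a *: u + v) = a *: f u + f v) a u : f (a *: u) = a *: f u.
Proof. by have := hf a u 0; rewrite addr0 (lin0 hf) addr0. Qed.

Lemma lin_sum (U V : lmodType R) (f : U -> V)
  (hf : forall a u v, f (a *: u + v) = a *: f u + f v) (I : finType) (w : I -> U) :
  f (\sum_i w i) = \sum_i f (w i).
Proof.
elim/big_rec2: _ => [|i x y _ <-]; first exact: lin0 hf.
exact: linD.
Qed.

Lemma inj_surj (p : nat) (f : 'M[R]_p -> 'M[R]_p)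
  (hf : forall a u v, f (a *: u + v) = a *: f u + f v)
  (hi : forall u, f u = 0 -> u = 0) : forall b, exists u, f u = b.
Proof.
pose g := fun v : 'rV[R]_(p * p) => mxvec (f (vec_mx v)).
have hg : forall a u v, g (a *: u + v) = a *: g u + g v.
  move=> a u v; rewrite /g linearD linearZ /= hf.
  by rewrite linearD linearZ.
pose A := \matrix_(i, j) (g (delta_mx 0 i)) 0 j.
have hA : forall u, u *m A = g u.
  move=> u; rewrite {2}[u]row_sum_delta (lin_sum hg).
  apply/rowP => j; rewrite !mxE summxE; apply: eq_bigr => i _.
  by rewrite (linZ hg) !mxE.
have uA : A \in unitmx.
  rewrite unitmxE unitfE; apply/negP => /det0P [v nv0].
  rewrite hA /g => /(congr1 vec_mx); rewrite mxvecK linear0 => /hi.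
  move/(congr1 mxvec); rewrite vec_mxK linear0 => hv.
  by rewrite hv eqxx in nv0.
move=> b; exists (vec_mx (mxvec b *m invmx A)).
by rewrite -[f _]mxvecK -/(g _) -hA mulmxKV // mxvecK.
Qed.
End Gen.
Section Dot.
Variables (R : realType) (p : nat).
Implicit Types u v w : 'M[R]_p.

Lemma dotMC u v : dotM u v = dotM v u.
Proof. by apply: eq_bigr => i _; apply: eq_bigr => j _; rewrite mulrC. Qed.

Lemma dotMDr u a v w : dotM u (a *: v + w) = a * dotM u v + dotM u w.
Proof.
rewrite /dotM mulr_sumr -big_split; apply: eq_bigr => i _.
rewrite mulr_sumr -big_split; apply: eq_bigr => j _.
by rewrite !mxE mulrDr mulrCA.
Qed.

Lemma dotMDl u a v w : dotM (a *: v + w) u = a * dotM v u + dotM w u.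
Proof. by rewrite dotMC dotMDr (dotMC u) (dotMC u). Qed.

Lemma dotMNl u v : dotM (- v) u = - dotM v u.
Proof.
rewrite /dotM -sumrN; apply: eq_bigr => i _; rewrite -sumrN; apply: eq_bigr => j _.
by rewrite mxE mulNr.
Qed.

Lemma dotMBl u v w : dotM (v - w) u = dotM v u - dotM w u.
Proof. by have := dotMDl u 1 v (- w); rewrite scale1r mul1r dotMNl. Qed.

Lemma dotMBr u v w : dotM u (v - w) = dotM u v - dotM u w.
Proof. by rewrite dotMC dotMBl !(dotMC u). Qed.

Lemma dotMZr u a v : dotM u (a *: v) = a * dotM u v.
Proof.
have h0 : dotM u 0 = 0.
  by rewrite /dotM big1 // => i _; rewrite big1 // => j _; rewrite mxE mulr0.
by have := dotMDr u a v 0; rewrite addr0 h0 addr0.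
Qed.

Lemma dotM_ge0 u : 0 <= dotM u u.
Proof. by apply: sumr_ge0 => i _; apply: sumr_ge0 => j _; apply: sqr_ge0. Qed.

Lemma dotM_eq0 u : dotM u u = 0 -> u = 0.
Proof.
move=> /eqP; rewrite psumr_eq0; last by move=> i _; apply: sumr_ge0 => j _; apply: sqr_ge0.
move=> /allP h; apply/matrixP => i j; rewrite mxE.
have := h i (mem_index_enum _); rewrite /= psumr_eq0; last by move=> k _; apply: sqr_ge0.
by move=> /allP /(_ j (mem_index_enum _)) /=; rewrite mulf_eq0 orbb => /eqP.
Qed.

Lemma dotMsum (I : finType) (w : I -> 'M[R]_p) u : dotM (\sum_i w i) u = \sum_i dotM (w i) u.
Proof.
elim/big_rec2: _ => [|i x y _ <-]; last by have := dotMDl u 1 (w i) y; rewrite scale1r mul1r.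
by rewrite /dotM big1 // => i _; rewrite big1 // => j _; rewrite mxE mul0r.
Qed.

Lemma dotS_ge0 (s : Sh R p) : 0 <= dotS s s.
Proof. by rewrite /dotS addr_ge0 // dotM_ge0. Qed.

Definition g1 u : 'M[R]_p := (gradh u).1.
Definition g2 u : 'M[R]_p := (gradh u).2.

Lemma gradhE u : gradh u = (g1 u, g2 u).
Proof. by []. Qed.

Lemma g1D a u v : g1 (a *: u + v) = a *: g1 u + g1 v.
Proof. apply/matrixP => i j; rewrite !mxE; case: ifP => _; rewrite ?mxE; ring. Qed.

Lemma g2D a u v : g2 (a *: u + v) = a *: g2 u + g2 v.
Proof. apply/matrixP => i j; rewrite !mxE; case: ifP => _; rewrite ?mxE; ring. Qed.

Lemma dotS_gradD (s : Sh R p) a u v :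
  dotS s (gradh (a *: u + v)) = a * dotS s (gradh u) + dotS s (gradh v).
Proof. rewrite /dotS -!/(g1 _) -!/(g2 _) g1D g2D !dotMDr; ring. Qed.

Lemma divh_adj (s : Sh R p) u : dotM (divh s) u = - dotS s (gradh u).
Proof.
pose phi := fun v : 'M[R]_p => (dotS s (gradh v) : R^o).
have hphi : forall a u v, phi (a *: u + v) = a *: phi u + phi v.
  by move=> a x y; rewrite /phi dotS_gradD.
rewrite -/(phi u) {2}[u]matrix_sum_delta (lin_sum hphi) /dotM -sumrN.
apply: eq_bigr => i _; rewrite (lin_sum hphi) -sumrN; apply: eq_bigr => j _.
by rewrite (linZ hphi) !mxE /GRing.scale /= mulNr mulrC.
Qed.

Lemma lap_adj u v : dotM (laph u) v = - dotS (gradh u) (gradh v).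
Proof. exact: divh_adj. Qed.

Lemma divhB (s t : Sh R p) : divh (subS s t) = divh s - divh t.
Proof.
apply/matrixP => i j; rewrite !mxE /dotS /subS /= !dotMBl; ring.
Qed.

Lemma divhD (s t : Sh R p) : divh (addS s t) = divh s + divh t.
Proof.
apply/matrixP => i j; rewrite !mxE /dotS /addS /=.
have h (x y z : 'M[R]_p) : dotM (y + z) x = dotM y x + dotM z x.
  by have := dotMDl x 1 y z; rewrite scale1r mul1r.
rewrite !h; ring.
Qed.

End Dot.
Section Main.
Variables (R : realType) (p : nat).
Implicit Types u v w : 'M[R]_p.

Lemma laphD a u v : laph (a *: u + v) = a *: laph u + laph v.
Proof.
apply/matrixP => i j; rewrite /laph /divh !mxE /dotS -!/(g1 _) -!/(g2 _).
rewrite g1D g2D !dotMDl; ring.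
Qed.

Lemma laphB u v : laph (u - v) = laph u - laph v.
Proof.
have := laphD (-1) v u; rewrite !scaleN1r => h.
by rewrite [u - v]addrC h addrC.
Qed.

Lemma const_line (hp : (0 < p)%N) (w : 'I_p -> R) :
  (forall i : 'I_p, (i.+1 < p)%N -> w (ordS i) = w i) -> forall i, w i = w (Ordinal hp).
Proof.
move=> h; suff: forall k (hk : (k < p)%N), w (Ordinal hk) = w (Ordinal hp).
  by move=> H [i hi]; apply: H.
elim=> [|k IH] hk; first by congr w; apply: val_inj.
have hk' : (k < p)%N by apply: ltnW.
rewrite -(IH hk') -(h (Ordinal hk')) //; congr w; apply: val_inj => /=.
by rewrite modn_small.
Qed.

Lemma grad0_const (hp : (0 < p)%N) u : g1 u = 0 -> g2 u = 0 ->
  forall i j, u i j = u (Ordinal hp) (Ordinal hp).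
Proof.
move=> h1 h2 i j.
have c1 : forall j, forall i, u i j = u (Ordinal hp) j.
  move=> j'; apply: (const_line (w := fun i => u i j') hp) => i' hi.
  have := congr1 (fun m : 'M[R]_p => m i' j') h1; rewrite /g1 !mxE hi => /eqP.
  by rewrite subr_eq0 => /eqP.
have c2 : forall j, u (Ordinal hp) j = u (Ordinal hp) (Ordinal hp).
  apply: (const_line (w := fun j => u (Ordinal hp) j) hp) => j' hj.
  have := congr1 (fun m : 'M[R]_p => m (Ordinal hp) j') h2; rewrite /g2 !mxE hj => /eqP.
  by rewrite subr_eq0 => /eqP.
by rewrite c1 c2.
Qed.

Definition one : 'M[R]_p := const_mx 1.

Lemma g1_one : g1 one = 0.
Proof. by apply/matrixP => i j; rewrite !mxE; case: ifP; rewrite ?subrr. Qed.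
Lemma g2_one : g2 one = 0.
Proof. by apply/matrixP => i j; rewrite !mxE; case: ifP; rewrite ?subrr. Qed.

Lemma dotM0r u : dotM u 0 = 0.
Proof. by rewrite /dotM big1 // => i _; rewrite big1 // => j _; rewrite mxE mulr0. Qed.

Lemma dotS_grad_one (s : Sh R p) : dotS s (gradh one) = 0.
Proof. by rewrite gradhE g1_one g2_one /dotS /= !dotM0r addr0. Qed.

Lemma dot_simplex mu : in_simplex mu -> dotM mu one = 1.
Proof.
move=> [_ <-]; apply: eq_bigr => i _; apply: eq_bigr => j _; by rewrite mxE mulr1.
Qed.

Lemma dotS_eq0 (s : Sh R p) : dotS s s = 0 -> s.1 = 0 /\ s.2 = 0.
Proof.
rewrite /dotS => /eqP; rewrite paddr_eq0 ?dotM_ge0 // => /andP [/eqP a /eqP b].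
by split; apply: dotM_eq0.
Qed.

End Main.

Lemma dotMDl1 (R : realType) (p : nat) (x y z : 'M[R]_p) : dotM (y + z) x = dotM y x + dotM z x.
Proof. by have := dotMDl x 1 y z; rewrite scale1r mul1r. Qed.
Lemma dotMZl (R : realType) (p : nat) (x y : 'M[R]_p) a : dotM (a *: y) x = a * dotM y x.
Proof. by rewrite dotMC dotMZr dotMC. Qed.

Definition crossp (R : realType) (p N : nat) (x y z : ('I_N -> Sh R p) * 'M[R]_p) : R :=
  \sum_(k < N) (dotM ((x.1 k).1 - (y.1 k).1) ((y.1 k).1 - (z.1 k).1)
               + dotM ((x.1 k).2 - (y.1 k).2) ((y.1 k).2 - (z.1 k).2))
  + dotM (x.2 - y.2) (y.2 - z.2).

Lemma sq3 (R : realType) (p : nat) (a b c : 'M[R]_p) :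
  dotM (a - c) (a - c) = dotM (a - b) (a - b) + dotM (b - c) (b - c) + 2 * dotM (a - b) (b - c).
Proof.
have -> : a - c = (a - b) + (b - c) by rewrite addrA subrK.
have h (x y z : 'M[R]_p) : dotM (y + z) x = dotM y x + dotM z x.
  by have := dotMDl x 1 y z; rewrite scale1r mul1r.
have h' (x y z : 'M[R]_p) : dotM x (y + z) = dotM x y + dotM x z.
  by rewrite dotMC h !(dotMC x).
move: (a - b) (b - c) => d e; rewrite !h !h' (dotMC e d); ring.
Qed.

Lemma sqdist_split (R : realType) (p N : nat) (x y z : ('I_N -> Sh R p) * 'M[R]_p) :
  sqdist x z = sqdist x y + sqdist y z + 2 * crossp x y z.
Proof.
rewrite /sqdist /crossp /dotS /subS /=.
rewrite (eq_bigr (fun k => (dotM ((x.1 k).1 - (y.1 k).1) ((x.1 k).1 - (y.1 k).1)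
     + dotM ((x.1 k).2 - (y.1 k).2) ((x.1 k).2 - (y.1 k).2))
  + (dotM ((y.1 k).1 - (z.1 k).1) ((y.1 k).1 - (z.1 k).1)
     + dotM ((y.1 k).2 - (z.1 k).2) ((y.1 k).2 - (z.1 k).2))
  + 2 * (dotM ((x.1 k).1 - (y.1 k).1) ((y.1 k).1 - (z.1 k).1)
               + dotM ((x.1 k).2 - (y.1 k).2) ((y.1 k).2 - (z.1 k).2)))); last first.
  move=> k _; rewrite (sq3 ((x.1 k).1) ((y.1 k).1) ((z.1 k).1)).
  rewrite (sq3 ((x.1 k).2) ((y.1 k).2) ((z.1 k).2)); ring.
rewrite big_split /= big_split /= -mulr_sumr (sq3 x.2 y.2 z.2).
ring.
Qed.

Lemma sqdist_ge0 (R : realType) (p N : nat) (x y : ('I_N -> Sh R p) * 'M[R]_p) :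
  0 <= sqdist x y.
Proof. by rewrite /sqdist addr_ge0 ?dotM_ge0 // sumr_ge0 // => k _; apply: dotS_ge0. Qed.

Theorem proposition7p1 (R : realType) (p N : nat) (hp : (0 < p)%N)
  (hN : (2 <= N)%N)
  (nus : 'I_N -> 'M[R]_p) (hnus : forall k, in_simplex (nus k))
  (sigma : 'I_N -> Sh R p) (nu : 'M[R]_p) (hnu : in_simplex nu) :
  (forall i : 'I_N, exists xi : 'M[R]_p,
      - laph xi = divh (sigma i) + nus i - nu)
  /\ (forall x : 'M[R]_p, exists! z : 'M[R]_p, z - N%:R^-1 *: laph z = x)
  /\ (forall xi' : 'I_N -> 'M[R]_p,
        (forall i, - laph (xi' i) = divh (sigma i) + nus i - nu) ->
        forall zeta : 'M[R]_p,
          zeta - N%:R^-1 *: laph zeta = N%:R^-1 *: \sum_(j < N) xi' j ->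
          let xi := fun i => xi' i - zeta in
          is_proj (Fh nus) (sigma, nu)
            (fun i => addS (sigma i) (gradh (xi i)), nu + \sum_(i < N) xi i)).
Proof.
have hNR : (N%:R : R) != 0 by rewrite pnatr_eq0 -lt0n; apply: leq_trans hN.
have hone : dotM (one R p) (one R p) != 0.
  have -> : dotM (one R p) (one R p) = (1 *+ p) *+ p.
    rewrite /dotM (eq_bigr (fun _ => (1 : R) *+ p)) ?sumr_const ?card_ord // => i _.
    rewrite (eq_bigr (fun _ => (1 : R))) ?sumr_const ?card_ord // => j _.
    by rewrite mxE mulr1.
  by rewrite !mulrn_eq0 negb_or -lt0n hp oner_eq0 /= negb_or -lt0n hp.
split.
  move=> i.
  pose M := fun u : 'M[R]_p => - laph u + dotM u (one R p) *: one R p.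
  have hM : forall a u v, M (a *: u + v) = a *: M u + M v.
    move=> a u v; rewrite /M laphD dotMDl.
    apply/matrixP => i' j'; rewrite !mxE; ring.
  have hMi : forall u, M u = 0 -> u = 0.
    move=> u Mu.
    have := congr1 (fun m : 'M[R]_p => dotM m u) Mu; rewrite /= [dotM 0 u]dotMC dotM0r.
    rewrite /M dotMDl1 dotMNl lap_adj opprK dotMZl (dotMC (one R p) u).
    move=> /eqP; rewrite paddr_eq0 ?dotS_ge0 -?expr2 ?sqr_ge0 // expr2.
    rewrite mulf_eq0 orbb => /andP [/eqP /dotS_eq0 [h1 h2] /eqP hs].
    have hc := grad0_const hp h1 h2.
    move: hs; rewrite /dotM (eq_bigr (fun _ => u (Ordinal hp) (Ordinal hp) *+ p)).
      rewrite sumr_const card_ord => /eqP; rewrite !mulrn_eq0 eqn0Ngt hp /= => /eqP h0.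
      by apply/matrixP => a b; rewrite hc h0 mxE.
    move=> a _; rewrite (eq_bigr (fun _ => u (Ordinal hp) (Ordinal hp))) ?sumr_const ?card_ord // => b _.
    by rewrite hc mxE mulr1.

  have [u Mu] := inj_surj hM hMi (divh (sigma i) + nus i - nu).
  exists u.
  have := congr1 (fun m : 'M[R]_p => dotM m (one R p)) Mu; rewrite /=.
  rewrite /M (dotMDl1 (one R p) (- laph u)) (dotMNl (one R p) (laph u)) lap_adj dotS_grad_one !oppr0 add0r dotMZl.
  rewrite dotMBl dotMDl1 divh_adj dotS_grad_one !(dot_simplex (hnus i)) (dot_simplex hnu) oppr0 add0r subrr.
  move/eqP; rewrite mulf_eq0 (negbTE hone) orbF => /eqP h0.
  by move: Mu; rewrite /M h0 scale0r addr0.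
split.
  pose f := fun z : 'M[R]_p => z - N%:R^-1 *: laph z.
  have hf : forall a u v, f (a *: u + v) = a *: f u + f v.
    move=> a u v; rewrite /f laphD.
    apply/matrixP => i' j'; rewrite !mxE; ring.
  have hfi : forall u, f u = 0 -> u = 0.
    move=> u fu; have := congr1 (fun m : 'M[R]_p => dotM m u) fu.
    rewrite /= [dotM 0 u]dotMC dotM0r /f dotMBl dotMZl lap_adj mulrN opprK.
    move=> /eqP; rewrite paddr_eq0 ?dotM_ge0 ?mulr_ge0 ?invr_ge0 ?ler0n ?dotS_ge0 //.
    by move=> /andP [/eqP h _]; apply: dotM_eq0.
  move=> x; have [z fz] := inj_surj hf hfi x; exists z; split => // z' fz'.
  apply/eqP; rewrite -subr_eq0; apply/eqP/hfi.
  have := hf (-1) z' z; rewrite !scaleN1r [- z' + z]addrC => ->.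
  by rewrite addrC fz; move: fz'; rewrite -/(f z') => ->; rewrite subrr.
move=> xi' H zeta hz xi.
have hS : \sum_(j < N) xi' j = N%:R *: zeta - laph zeta.
  have := congr1 (fun m => N%:R *: m) hz; rewrite /= scalerA mulfV // scale1r.
  by rewrite scalerBr scalerA mulfV // scale1r => <-.
have Fy : Fh nus (fun i => addS (sigma i) (gradh (xi i)), nu + \sum_(i < N) xi i).
  move=> k /=; rewrite divhD -/(laph _).
  rewrite /xi laphB sumrB sumr_const card_ord hS.
  have hL : laph (xi' k) = - (divh (sigma k) + nus k - nu) by rewrite -H opprK.
  rewrite hL -scaler_nat; apply/matrixP => a b; rewrite !mxE; ring.
split => // z Fz.
rewrite (sqdist_split (sigma, nu) (fun i => addS (sigma i) (gradh (xi i)), nu + \sum_(i < N) xi i) z).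
suff -> : crossp (sigma, nu) (fun i => addS (sigma i) (gradh (xi i)), nu + \sum_(i < N) xi i) z = 0.
  by rewrite mulr0 addr0 lerDl sqdist_ge0.
set y := (fun i => addS (sigma i) (gradh (xi i)), nu + \sum_(i < N) xi i) in Fy *.
have y1 : forall k, y.1 k = addS (sigma k) (gradh (xi k)) by [].
have y2 : y.2 = nu + \sum_(i < N) xi i by [].
have e0 (a b : 'M[R]_p) : a - (a + b) = - b by rewrite opprD addrA subrr add0r.
rewrite /crossp (eq_bigr (fun k => dotM (y.2 - z.2) (xi k))); last first.
  move=> k _; have := divh_adj (subS (y.1 k) (z.1 k)) (xi k).
  rewrite divhB.
  have h1 : divh (y.1 k) = y.2 - nus k by rewrite -(Fy k) addrK.
  have h2 : divh (z.1 k) = z.2 - nus k by rewrite -(Fz k) addrK.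
  rewrite h1 h2 opprB addrA subrK => ->.
  rewrite y1 /dotS /subS /addS /= !e0 !dotMNl opprD.
  by rewrite (dotMC ((gradh (xi k)).1)) (dotMC ((gradh (xi k)).2)).
rewrite y2 /= e0 dotMNl dotMsum -sumrB big1 // => k _.
by rewrite dotMC subrr.
Qed.
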